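(* (a) Let $n\ge 7$ and let $TL_n(a,a-1,1)$ be a 6-valent first-kind Frobenius circulant with cyclic kernel, where $n\equiv 1 \pmod 6$ and $a$ is a solution of $x^2-x+1\equiv 0 \pmod n$. Then $TL_n(a,a-1,1)$ is isomorphic to $EJ_\alpha$ for some $\alpha=c+d\rho\in\mathbb{Z}[\rho]$ with $\gcd(c,d)=1$. Moreover, letting $k$ be the integer defined by $a^2-a+1=kn$, one has $\alpha=(rn+m)+(sn-ma)\rho$, or $\alpha=(rn+m)+(sn+m(a-1))\rho$, or $\alpha=(rn+ma)+(sn-m(a-1))\rho$, where $(m,r,s)$ is an integer solution of, respectively, $$km^2-[(a-2)r+(2a-1)s]m+(r^2+rs+s^2)n=1,$$ $$km^2+[(a+1)r+(2a-1)s]m+(r^2+rs+s^2)n=1,$$ $$km^2+[(a+1)r-(a-2)s]m+(r^2+rs+s^2)n=1.$$ (b) Let $\alpha=c+d\rho\in\mathbb{Z}[\rho]$ with $N(\alpha)\ge 7$ and $\gcd(c,d)=1$. Then $EJ_\alpha$ is isomorphic to a 6-valent first-kind Frobenius circulant with cyclic kernel if and only if $N(\alpha)\equiv 1 \pmod 6$.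
   Context: $\rho=(1+\sqrt{-3})/2$, $\mathbb{Z}[\rho]=\{x+y\rho: x,y\in\mathbb{Z}\}$ is the ring of Eisenstein-Jacobi integers with norm $N(x+y\rho)=x^2+xy+y^2$. For $0\ne\alpha\in\mathbb{Z}[\rho]$ with $N(\alpha)\ge 7$, the Eisenstein-Jacobi graph $EJ_\alpha$ is the Cayley graph on the additive group of $\mathbb{Z}[\rho]/(\alpha)$ with connection set $\{\pm[1]_\alpha,\pm[\rho]_\alpha,\pm[\rho^2]_\alpha\}$, i.e. $[\xi]_\alpha,[\eta]_\alpha$ are adjacent iff their difference is one of these six classes. For $n\ge 7$, $\mathbb{Z}_n$ denotes integers mod $n$ with classes $[m]$ and unit group $\mathbb{Z}_n^*$ acting by multiplication; $\mathrm{Cay}(K,S)$ is the Cayley graph ($x\sim y$ iff $xy^{-1}\in S$); $TL_n(a,b,c)=\mathrm{Cay}(\mathbb{Z}_n,\{\pm[a],\pm[b],\pm[c]\})$ when $a,b,c,n-a,n-b,n-c$ are pairwise distinct mod $n$. A Frobenius group is a transitive, non-regular permutation group in which only the identity fixes two points; a finite one is $K\rtimes H$ with regular normal kernel $K$ and point stabiliser $H$ acting on $K$ by conjugation. A first-kind $K\rtimes H$-Frobenius graph is $\mathrm{Cay}(K,s^H)$ with $\langle s^H\rangle=K$ and $|H|$ even or $s$ an involution. A 6-valent first-kind Frobenius circulant with cyclic kernel is a 6-valent $TL_n(a,b,c)$ that is a first-kind $\mathbb{Z}_n\rtimes H$-Frobenius graph for some $H\le \mathbb{Z}_n^*$ with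 $\mathbb{Z}_n\rtimes H$ (acting by $[x]^{([y],[m])}=[(x+y)m]$) a Frobenius group with kernel $\mathbb{Z}_n$. *)

(* Defs.v *)
From HB Require Import structures.
From mathcomp Require Import all_boot all_order all_algebra all_fingroup.
Set Implicit Arguments. Unset Strict Implicit. Unset Printing Implicit Defensive.
Import Order.TTheory GRing.Theory Num.Theory.
Local Open Scope ring_scope.

(* x + y rho is encoded by the pair (x, y); rho^2 = rho - 1. *)
Definition ej := (int * int)%type.

Definition ej_add (u v : ej) : ej := (u.1 + v.1, u.2 + v.2).
Definition ej_sub (u v : ej) : ej := (u.1 - v.1, u.2 - v.2).
(* (a + b rho)(c + d rho) = (ac - bd) + (ad + bc + bd) rho *)
Definition ej_mul (u v : ej) : ej :=
  (u.1 * v.1 - u.2 * v.2, u.1 * v.2 + u.2 * v.1 + u.2 * v.2).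
Definition ej_norm (u : ej) : int := u.1 ^+ 2 + u.1 * u.2 + u.2 ^+ 2.

Definition ej_cong (alpha xi eta : ej) : Prop :=
  exists gamma : ej, ej_sub xi eta = ej_mul alpha gamma.

(* the six units 1, rho, rho^2 = -1 + rho and their negatives *)
Definition ej_units : seq ej :=
  [:: (1, 0); (-1, 0); (0, 1); (0, -1); (-1, 1); (1, -1)].

Definition ej_adj (alpha xi eta : ej) : Prop :=
  exists2 u, u \in ej_units & ej_cong alpha (ej_sub xi eta) u.

Definition tl_list (n : nat) (a b c : int) : seq 'Z_n :=
  [:: a%:~R; - a%:~R; b%:~R; - b%:~R; c%:~R; - c%:~R].
Definition tl_set (n : nat) (a b c : int) : {set 'Z_n} := [set x in tl_list n a b c].
Definition tl_adj (n : nat) (a b c : int) (x y : 'Z_n) : bool :=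
  (x - y) \in tl_set n a b c.

(* EJ_alpha is isomorphic to TL_n(a,b,c): a bijection Z[rho]/(alpha) -> Z_n
   (presented as a map on representatives that is well defined and injective
   on classes, and surjective) preserving and reflecting adjacency. *)
Definition ej_iso_tl (alpha : ej) (n : nat) (a b c : int) : Prop :=
  exists f : ej -> 'Z_n,
    [/\ (forall xi eta, f xi = f eta <-> ej_cong alpha xi eta),
        (forall x : 'Z_n, exists xi, f xi = x) &
        (forall xi eta, ej_adj alpha xi eta <-> tl_adj a b c (f xi) (f eta))].

Definition frob_act (n : nat) (y : 'Z_n) (m : {unit 'Z_n}) (x : 'Z_n) : 'Z_n :=
  (x + y) * FinRing.uval m.

Definition is_id_perm (n : nat) (y : 'Z_n) (m : {unit 'Z_n}) : Prop :=
  forall x, frob_act y m x = x.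

Definition frobenius_ZH (n : nat) (H : {group {unit 'Z_n}}) : Prop :=
  [/\
      (forall x z : 'Z_n, exists y, exists2 m, m \in H & frob_act y m x = z),
      (exists y, exists2 m, m \in H &
         ~ is_id_perm y m /\ exists x, frob_act y m x = x),
      (forall y m, m \in H -> forall x1 x2, x1 != x2 ->
         frob_act y m x1 = x1 -> frob_act y m x2 = x2 -> is_id_perm y m) &
      (* the Frobenius kernel (identity + fixed-point-free elements) is
         the translation subgroup Z_n *)
      (forall y m, m \in H ->
         (is_id_perm y m \/ (forall x, frob_act y m x != x)) <-> m = 1%g)].

(* 6-valent first-kind Frobenius circulant with cyclic kernel:
   TL_n(a,b,c) (six distinct elements) equal to Cay(Z_n, s^H), a first-kind
   Z_n x| H - Frobenius graph. *)
Definition frob_circ6 (n : nat) (a b c : int) : Prop :=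
  [/\ (7 <= n)%N, uniq (tl_list n a b c) &
      exists H : {group {unit 'Z_n}}, frobenius_ZH H /\
      exists s : 'Z_n,
        [/\ tl_set n a b c = [set s * FinRing.uval h | h in H],
            (<<[set s * FinRing.uval h | h in H]>> = [set: 'Z_n])%g &
            (~~ odd #|H| \/ (s != 0 /\ s + s = 0))]].

(* Main.v *)
Require Import Defs.
From HB Require Import structures.
From mathcomp Require Import all_boot all_order all_algebra all_fingroup.
From mathcomp Require Import cyclic pgroup sylow.
From mathcomp Require Import zify ring lra.
From Stdlib Require Import PeanoNat.
Import Order.TTheory GRing.Theory Num.Theory.
Local Open Scope ring_scope.
Import FinRing.Theory.

Lemma Zn_nat0 (n m : nat) : (1 < n)%N -> ((m%:R : 'Z_n) = 0) <-> (n %| m)%N.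
Proof.
move=> n1; split=> [h|h].
  have := val_Zp_nat n1 m; rewrite h /= => h0.
  by rewrite /dvdn -h0.
apply: val_inj; rewrite /= val_Zp_nat //.
by move: h; rewrite /dvdn => /eqP ->.
Qed.

Lemma Zn_int0 (n : nat) (z : int) : (1 < n)%N ->
  ((z%:~R : 'Z_n) = 0) <-> (n%:Z %| z)%Z.
Proof.
move=> n1; case: z => m.
  by rewrite -pmulrn Zn_nat0 // dvdzE.
rewrite NegzE mulrNz dvdzE abszN -pmulrn -Zn_nat0 //; split=> [/eqP|->]; rewrite ?oppr0 // oppr_eq0 => /eqP; done.
Qed.

Lemma Zn_inteq (n : nat) (x y : int) : (1 < n)%N ->
  ((x%:~R : 'Z_n) = y%:~R) <-> (n%:Z %| x - y)%Z.
Proof.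
move=> n1; rewrite -Zn_int0 // intrB; split; first by move->; rewrite subrr.
by move/eqP; rewrite subr_eq0 => /eqP.
Qed.

Definition ejf (n : nat) (e : int) (xi : ej) : 'Z_n := ((xi.1 + xi.2 * e)%:~R).

Lemma ejf_cong (n : nat) (c d e : int) : (1 < n)%N ->
  c ^+ 2 + c * d + d ^+ 2 = n%:Z -> (n%:Z %| c + d * e)%Z ->
  (n%:Z %| e ^+ 2 - e + 1)%Z ->
  forall xi eta, ejf n e xi = ejf n e eta <-> ej_cong (c, d) xi eta.
Proof.
move=> n1 hN /dvdzP [q1 hq1] /dvdzP [q2 hq2] [x1 x2] [y1 y2].
rewrite /ejf /ej_cong /ej_sub /ej_mul /= Zn_inteq //.
have nz : n%:Z != 0 by lia.
split.
  move=> /dvdzP [q0 hq0].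
  exists ((x1 - y1) * q1 + d * (1 - e) * q0 + d * (x2 - y2) * q2,
          (x2 - y2) * q1 - d * q0) => /=.
  congr (_, _); symmetry; apply: (mulfI nz).
    transitivity (c * ((x1 - y1) * (q1 * n) + d * (1 - e) * (q0 * n) + d * (x2 - y2) * (q2 * n))
                  - d * ((x2 - y2) * (q1 * n) - d * (q0 * n))); first by ring.
    rewrite -hq0 -hq1 -hq2.
    transitivity ((x1 - y1) * (c ^+ 2 + c * d + d ^+ 2)); first by ring.
    by rewrite hN; ring.
  transitivity (c * ((x2 - y2) * (q1 * n) - d * (q0 * n)) + d * ((x1 - y1) * (q1 * n) + d * (1 - e) * (q0 * n) + d * (x2 - y2) * (q2 * n))
                 + d * ((x2 - y2) * (q1 * n) - d * (q0 * n))); first by ring.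
  rewrite -hq0 -hq1 -hq2.
  transitivity ((x2 - y2) * (c ^+ 2 + c * d + d ^+ 2)); first by ring.
  by rewrite hN; ring.
move=> [[g1 g2]] /= [h1 h2].
apply/dvdzP; exists ((g1 + g2 * e) * q1 - g2 * d * q2).
transitivity ((x1 - y1) + (x2 - y2) * e); first by ring.
rewrite h1 h2.
transitivity ((g1 + g2 * e) * (c + d * e) - g2 * d * (e ^+ 2 - e + 1)); first by ring.
by rewrite hq1 hq2; ring.
Qed.

Lemma ejf_sub (n : nat) e xi eta : ejf n e (ej_sub xi eta) = ejf n e xi - ejf n e eta.
Proof. by rewrite /ejf /ej_sub -intrB /=; congr (_%:~R); ring. Qed.

Lemma ejf_units (n : nat) (e : int) :
  map (ejf n e) ej_units = rot 4 (tl_list n e (e - 1) 1).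
Proof.
rewrite /ejf /ej_units /tl_list /rot /=.
rewrite !(mul0r, addr0, add0r, mul1r, mulN1r, intrN, intrB).
by rewrite opprB intrD addrC.
Qed.

Lemma iso_gen (n : nat) (c d e : int) : (1 < n)%N ->
  c ^+ 2 + c * d + d ^+ 2 = n%:Z -> (n%:Z %| c + d * e)%Z ->
  (n%:Z %| e ^+ 2 - e + 1)%Z -> ej_iso_tl (c, d) n e (e - 1) 1.
Proof.
move=> n1 hN hd he; exists (ejf n e); split.
- by move=> xi eta; apply: ejf_cong.
- move=> x; exists ((nat_of_ord x)%:Z, 0); rewrite /ejf /= mul0r addr0.
  rewrite -pmulrn.
  exact: natr_Zp.
- move=> xi eta; rewrite /ej_adj /tl_adj /tl_set inE -ejf_sub -(mem_rot 4) -ejf_units.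
  split.
    by case=> u hu /(ejf_cong _ _ _ _ n1 hN hd he) ->; apply: map_f.
  case/mapP=> u hu hv; exists u => //; apply/(ejf_cong _ _ _ _ n1 hN hd he).
  by rewrite hv.
Qed.


Lemma card_Zn (n : nat) : (1 < n)%N -> #|'Z_n| = n.
Proof. by move=> n1; rewrite card_ord Zp_cast. Qed.

Lemma thue (n : nat) (a : int) : (7 <= n)%N -> n = 1 %[mod 6] ->
  (n%:Z %| a ^+ 2 - a + 1)%Z ->
  exists x y : int, (n%:Z %| x - a * y)%Z /\ x ^+ 2 - x * y + y ^+ 2 = n%:Z.
Proof.
move=> n7 n6 /dvdzP [k hk].
have n1 : (1 < n)%N by lia.
pose s := Nat.sqrt n.
have [hs1 hs2] : (s * s <= n /\ n < s.+1 * s.+1)%N by have := Nat.sqrt_spec n; rewrite /s; lia.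
pose t := (n %/ s.+1)%N.
have ht1 : (t * s.+1 <= n)%N by rewrite leq_divM.
have ht2 : (n < t.+1 * s.+1)%N.
  by rewrite [in X in (X < _)%N](divn_eq n s.+1) mulSn addnC ltn_add2r ltn_mod.
pose phi (p : 'I_s.+1 * 'I_t.+1) : 'Z_n := ((p.1 : nat)%:Z - a * (p.2 : nat)%:Z)%:~R.
have : ~~ injectiveb phi.
  apply/negP => /injectiveP /leq_card; rewrite card_prod !card_ord Zp_cast //.
  lia.
case/injectivePn => [[i j] [[i' j'] ne]] /(Zn_inteq _ _ _ n1) hd.
exists ((i : nat)%:Z - (i' : nat)%:Z), ((j : nat)%:Z - (j' : nat)%:Z).
have hxy : (n%:Z %| ((i : nat)%:Z - (i' : nat)%:Z) - a * ((j : nat)%:Z - (j' : nat)%:Z))%Z.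
  by move: hd; congr (_ %| _)%Z; ring.
split=> //.
have nz : ((i : nat)%:Z - (i' : nat)%:Z != 0) || ((j : nat)%:Z - (j' : nat)%:Z != 0).
  rewrite -negb_and; apply/negP => /andP [/eqP x0 /eqP y0]; apply: (negP ne).
  rewrite xpair_eqE; apply/andP; split; apply/eqP/val_inj => /=; lia.
have hi := ltn_ord i; have hi' := ltn_ord i'; have hj := ltn_ord j; have hj' := ltn_ord j'.
have hts : (t <= s)%N.
  by rewrite -ltnS -(ltn_pmul2r (ltn0Sn s)); apply: leq_ltn_trans ht1 hs2.
move: hxy nz.
have : (-(s%:Z) <= (i : nat)%:Z - (i' : nat)%:Z <= s%:Z) by lia.
have : (-(t%:Z) <= (j : nat)%:Z - (j' : nat)%:Z <= t%:Z) by lia.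
have hss : (s%:Z * s%:Z <= n%:Z) by lia.
have htt : (t%:Z * (s%:Z + 1) <= n%:Z) by lia.
have hts' : t%:Z <= s%:Z by lia.
have hn6 : exists w : int, n%:Z = 6 * w + 1.
  by exists (n %/ 6)%N%:Z; lia.
case: hn6 => w hw.
clearbody s t; clear -hk hss htt hts' hw n7.
move: ((i : nat)%:Z - (i' : nat)%:Z) ((j : nat)%:Z - (j' : nat)%:Z) => x y hy hx /dvdzP [q hq] nz.
have hQ : x ^+ 2 - x * y + y ^+ 2 = n%:Z * (q * (x + a * y - y) + y ^+ 2 * k).
  transitivity ((x - a * y) * (x + a * y - y) + y ^+ 2 * (a ^+ 2 - a + 1)); first by ring.
  by rewrite hq hk; ring.
have Qp : 0 < x ^+ 2 - x * y + y ^+ 2.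
  have sq (z : int) : z != 0 -> 0 < z ^+ 2 by move=> zn; rewrite lt_def sqrf_eq0 zn sqr_ge0.
  have := sqr_ge0 (2 * y - x); have := sqr_ge0 (2 * x - y).
  Timeout 20 case/orP: nz => /sq h; lia.
have Q3 : x ^+ 2 - x * y + y ^+ 2 < 3 * n%:Z.
  case/andP: hx => hx1 hx2; case/andP: hy => hy1 hy2.
  have p1 : 0 <= (s%:Z + x) * (t%:Z + y) by apply: mulr_ge0; lia.
  have p2 : 0 <= (s%:Z - x) * (t%:Z - y) by apply: mulr_ge0; lia.
  have p3 : 0 <= (s%:Z - x) * (s%:Z + x) by apply: mulr_ge0; lia.
  have p4 : 0 <= (t%:Z - y) * (t%:Z + y) by apply: mulr_ge0; lia.
  have p5 : 0 <= t%:Z * (s%:Z - t%:Z) by apply: mulr_ge0; lia.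
  have p6 : t%:Z * s%:Z < n%:Z.
    have [t0|t0] := eqVneq t 0%N; first by rewrite t0 mul0r; lia.
    lia.
  Timeout 30 lia.
move: Qp Q3; rewrite hQ; set m := (q * _ + _ : int) => Qp Q3.
have n0 : 0 < n%:Z by lia.
have m0 : 0 < m by move: Qp; rewrite (pmulr_rgt0 _ n0).
have m3 : m < 3 by move: Q3; rewrite [3 * _]mulrC (ltr_pM2l n0).
have : m = 1 \/ m = 2 by lia.
case=> hm; first by rewrite hm mulr1.
exfalso.
have hm2 : x ^+ 2 - x * y + y ^+ 2 = 2 * n%:Z by rewrite hQ -/m hm mulrC.
rewrite hw in hm2.
have := divz_eq x 2; have := divz_eq y 2.
have := modz_ge0 x (isT : (2:int) != 0); have := modz_ge0 y (isT : (2:int) != 0).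
have := ltz_pmod x (isT : (0:int) < 2); have := ltz_pmod y (isT : (0:int) < 2).
move: (x %/ 2)%Z (y %/ 2)%Z (x %% 2)%Z (y %% 2)%Z => u v r1 r2.
move=> hr2 hr1 hr2' hr1' hy' hx'.
rewrite hx' hy' in hm2.
have [e1|e1] : r1 = 0 \/ r1 = 1 by lia.
  have [e2|e2] : r2 = 0 \/ r2 = 1 by lia.
    rewrite e1 e2 in hm2; lia.
  rewrite e1 e2 in hm2; lia.
have [e2|e2] : r2 = 0 \/ r2 = 1 by lia.
  rewrite e1 e2 in hm2; lia.
rewrite e1 e2 in hm2; lia.
Qed.

Lemma gcd_one (c d a k t nn : int) : nn != 0 ->
  c ^+ 2 + c * d + d ^+ 2 = nn -> c + a * d = t * nn -> a ^+ 2 - a + 1 = k * nn ->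
  gcdz c d = 1%N.
Proof.
move=> nz hN ht hk.
have hb : t * c + (t - t * a + d * k) * d = 1.
  apply: (mulfI nz); rewrite mulr1.
  transitivity ((t * nn) * c + (t * nn) * d - (t * nn) * a * d + d ^+ 2 * (k * nn)); first by ring.
  rewrite -ht -hk; transitivity (c ^+ 2 + c * d + d ^+ 2); [ring | exact: hN].
have : (gcdz c d %| t * c + (t - t * a + d * k) * d)%Z.
  by apply: rpredD; apply: dvdz_mull; rewrite ?dvdz_gcdl ?dvdz_gcdr.
rewrite hb dvdz1 => /eqP; by rewrite /gcdz /= => ->. Qed.

Lemma part_a (n : nat) (a : int) : (7 <= n)%N -> n = 1 %[mod 6] ->
     forall k : int, a ^+ 2 - a + 1 = k * n%:Z ->
     exists c d : int,
       [/\ gcdz c d = 1%N,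
           ej_iso_tl (c, d) n a (a - 1) 1 &
           exists m r s : int,
             [\/ (c = r * n%:Z + m /\ d = s * n%:Z - m * a /\
                  k * m ^+ 2 - ((a - 2) * r + (2 * a - 1) * s) * m
                  + (r ^+ 2 + r * s + s ^+ 2) * n%:Z = 1),
                 (c = r * n%:Z + m /\ d = s * n%:Z + m * (a - 1) /\
                  k * m ^+ 2 + ((a + 1) * r + (2 * a - 1) * s) * m
                  + (r ^+ 2 + r * s + s ^+ 2) * n%:Z = 1) |
                 (c = r * n%:Z + m * a /\ d = s * n%:Z - m * (a - 1) /\
                  k * m ^+ 2 + ((a + 1) * r - (a - 2) * s) * m
                  + (r ^+ 2 + r * s + s ^+ 2) * n%:Z = 1)]].
Proof.
move=> n7 n6 k hk.
have n1 : (1 < n)%N by lia.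
have nz : n%:Z != 0 by lia.
have hd : (n%:Z %| a ^+ 2 - a + 1)%Z by apply/dvdzP; exists k.
have [x [y [/dvdzP [t ht] hN]]] := thue _ a n7 n6 hd.
exists x, (- y); split.
- apply: (gcd_one x (- y) a k t n%:Z nz) => //; [by rewrite -hN; ring | by rewrite -ht; ring].
- apply: iso_gen => //.
  + by rewrite -hN; ring.
  + by apply/dvdzP; exists t; rewrite -ht; ring.
exists x, 0, (- y * k - t * (a - 1)); constructor 2; split; first by ring.
have hs : (- y * k - t * (a - 1)) * n%:Z = - y - x * (a - 1).
  transitivity (- y * (k * n) - (t * n) * (a - 1)); first by ring.
  by rewrite -hk -ht; ring.
split.
  transitivity ((- y * k - t * (a - 1)) * n%:Z + x * (a - 1)); last by ring.
  by rewrite hs; ring.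
apply: (mulfI nz); rewrite mulr1.
transitivity ((k * n) * x ^+ 2 + (2 * a - 1) * ((- y * k - t * (a - 1)) * n%:Z) * x
   + ((- y * k - t * (a - 1)) * n%:Z) ^+ 2); first by ring.
rewrite hs -hk -hN; ring.
Qed.


Lemma frob_cancel (n : nat) (H : {group {unit 'Z_n}}) : frobenius_ZH H ->
  forall m, m \in H -> m != 1%g -> forall x : 'Z_n, x * (FinRing.uval m - 1) = 0 -> x = 0.
Proof.
case=> _ _ two _ m mH m1 x hx.
apply/eqP; apply/negPn/negP => x0.
have hid := two 0 m mH x 0 (x0 : x != 0).
move: m1; rewrite -(inj_eq val_inj) /=.
suff -> : FinRing.uval m = 1 by rewrite eqxx.
have := hid _ _ 1; rewrite /frob_act !addr0 mul0r mul1r; apply=> //.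
by move/eqP: hx; rewrite mulrBr mulr1 subr_eq0 => /eqP.
Qed.

Lemma unit_neq0 (n : nat) (u : {unit 'Z_n}) (x : 'Z_n) : x * FinRing.uval u = 0 -> x = 0.
Proof.
move=> h; have uu : FinRing.uval u \is a GRing.unit by case: u {h}.
by rewrite -[x](mulrK uu) h mul0r.
Qed.

Lemma frob_not3 (n : nat) (a b e : int) : frob_circ6 n a b e -> ~~ (3 %| n)%N.
Proof.
case=> n7 huniq [H [fH [s [hset hgen hpar]]]].
have canc := frob_cancel _ _ fH.
have n1 : (1 < n)%N by lia.
have c6 : #|[set s * FinRing.uval h | h in H]| = 6%N.
  by rewrite -hset /tl_set cardsE; move/card_uniqP: huniq.
have s0 : s != 0.
  apply/negP => /eqP s0; move: c6; rewrite s0.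
  suff -> : [set 0 * FinRing.uval h | h in H] = [set 0] by rewrite cards1.
  apply/setP => z; rewrite !inE; apply/imsetP/eqP => [[h _ ->]|->]; first by rewrite mul0r.
  by exists 1%g; rewrite ?group1 // mul0r.
have cH : #|H| = 6%N.
  rewrite -c6 card_in_imset // => h h' hH h'H /eqP.
  rewrite -subr_eq0 -mulrBr => /eqP hh.
  apply/eqP; apply/negPn/negP => ne.
  have m1 : (h'^-1 * h)%g != 1%g by rewrite -eq_mulVg1 eq_sym.
  have mH : (h'^-1 * h)%g \in H by rewrite groupM ?groupV.
  have := canc _ mH m1 (s * FinRing.uval h').
  rewrite val_unitM val_unitV -mulrA mulrBr mulr1 mulrA mulrV ?mul1r; last by case: (h').
  move=> /(_ hh) /unit_neq0 s00; move: s0; by rewrite s00 eqxx.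
have [x xH ox] : {x | x \in H & #[x]%g = 3%N} by apply: Cauchy; rewrite ?cH.
have x1 : x != 1%g by apply/negP => /eqP x1; move: ox; rewrite x1 order1.
pose m := FinRing.uval x.
have hm3 : m ^+ 3 = 1 by rewrite /m -val_unitX -ox expg_order.
have hm : m ^+ 2 + m + 1 = 0.
  apply: (canc _ xH x1); rewrite -/m.
  transitivity (m ^+ 3 - 1); first by ring.
  by rewrite hm3 subrr.
apply/negP => /dvdnP [q hq].
pose z : 'Z_n := q%:R.
have z0 : z != 0.
  apply/negP => /eqP /(Zn_nat0 _ _ n1) /dvdnP [r hr].
  rewrite hq in hr; case: r hr => [|r] hr; first lia.
  have := leq_pmull (q * 3) (ltn0Sn r); rewrite -hr; lia.
have z3 : 3 * z = 0 by rewrite /z -natrM mulnC -hq pchar_Zp.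
have : z * (m - 1) * (m - 1) = 0.
  transitivity (z * (m ^+ 2 + m + 1) - (3 * z) * m); first by ring.
  by rewrite hm z3; ring.
move/(canc _ xH x1)/(canc _ xH x1)/eqP; apply/negP; exact: z0.
Qed.


Lemma powinv (R : comNzRingType) (E i2 i3 : R) :
  E ^+ 2 - E + 1 = 0 -> 2 * i2 = 1 -> 3 * i3 = 1 ->
  forall k, (0 < k < 6)%N -> exists w, (E ^+ k - 1) * w = 1.
Proof.
move=> hE h2 h3 [//|[|[|[|[|[|//]]]]]] _.
- exists (- E); apply/eqP; rewrite -subr_eq0; apply/eqP.
  transitivity (- (E ^+ 2 - E + 1)); first by ring.
  by rewrite hE oppr0.
- exists (- (E + 1) * i3); apply/eqP; rewrite -subr_eq0; apply/eqP.
  transitivity (- i3 * (E + 2) * (E ^+ 2 - E + 1) + (3 * i3 - 1)); first by ring.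
  by rewrite hE h3; ring.
- exists (- i2); apply/eqP; rewrite -subr_eq0; apply/eqP.
  transitivity (- i2 * (E + 1) * (E ^+ 2 - E + 1) + (2 * i2 - 1)); first by ring.
  by rewrite hE h2; ring.
- exists ((E - 2) * i3); apply/eqP; rewrite -subr_eq0; apply/eqP.
  transitivity (i3 * (E ^+ 3 - E ^+ 2 - 2 * E - 1) * (E ^+ 2 - E + 1) + (3 * i3 - 1)); first by ring.
  by rewrite hE h3; ring.
- exists (E - 1); apply/eqP; rewrite -subr_eq0; apply/eqP.
  transitivity ((E ^+ 4 - E ^+ 2 - E) * (E ^+ 2 - E + 1)); first by ring.
  by rewrite hE; ring.
Qed.

Lemma powinj (R : comNzRingType) (E i2 i3 : R) :
  E ^+ 2 - E + 1 = 0 -> 2 * i2 = 1 -> 3 * i3 = 1 ->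
  forall i j, (i < 6)%N -> (j < 6)%N -> E ^+ i = E ^+ j -> i = j.
Proof.
move=> hE h2 h3.
have hu : E * (1 - E) = 1.
  apply/eqP; rewrite -subr_eq0; apply/eqP.
  transitivity (- (E ^+ 2 - E + 1)); first by ring.
  by rewrite hE oppr0.
suff H i j : (i < j < 6)%N -> E ^+ i = E ^+ j -> False.
  move=> i j hi hj hij; case: (ltngtP i j) => // [lt|lt].
    by case: (H i j) => //; rewrite lt.
  by case: (H j i) => //; rewrite lt.
case/andP=> lt j6 hij.
have [w hw] := powinv _ _ _ _ hE h2 h3 (j - i)%N (ltac:(lia)).
have : E ^+ i * (E ^+ (j - i) - 1) = 0.
  by rewrite mulrBr mulr1 -exprD subnKC ?hij ?subrr // ltnW.
move/(congr1 (fun z => z * w * (1 - E) ^+ i)).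
rewrite -[E ^+ i * _ * w]mulrA hw mulr1 mul0r mul0r -exprMn hu expr1n => /eqP.
by rewrite oner_eq0.
Qed.

Lemma frob_construct (n : nat) (e : int) : (7 <= n)%N -> (n %% 6 = 1)%N ->
  (n%:Z %| e ^+ 2 - e + 1)%Z -> frob_circ6 n e (e - 1) 1.
Proof.
move=> n7 n6 hd.
have n1 : (1 < n)%N by lia.
pose E : 'Z_n := e%:~R.
have hE : E ^+ 2 - E + 1 = 0.
  have := (Zn_int0 _ _ n1).2 hd.
  by rewrite expr2 intrD intrB intrM -expr2.
have h2 : 2 * (((n + 1) %/ 2)%N%:R : 'Z_n) = 1.
  rewrite -natrM (_ : (2 * _)%N = n + 1)%N; last by lia.
  by rewrite natrD pchar_Zp // add0r.
have h3 : 3 * (((2 * n + 1) %/ 3)%N%:R : 'Z_n) = 1.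
  rewrite -natrM (_ : (3 * _)%N = 2 * n + 1)%N; last by lia.
  by rewrite natrD natrM pchar_Zp // mulr0 add0r.
have hpinj := powinj _ _ _ _ hE h2 h3.
have hpinv := powinv _ _ _ _ hE h2 h3.
have E2 : E ^+ 2 = E - 1 by apply/eqP; rewrite -subr_eq0; apply/eqP; rewrite -hE; ring.
have E3 : E ^+ 3 = -1 by rewrite exprS E2; apply/eqP; rewrite -subr_eq0; apply/eqP; rewrite -hE; ring.
have E6 : E ^+ 6 = 1 by rewrite (_ : 6 = 3 * 2)%N // exprM E3; ring.
have Eu : E \is a GRing.unit.
  apply/unitrPr; exists (1 - E); apply/eqP; rewrite -subr_eq0; apply/eqP.
  transitivity (- (E ^+ 2 - E + 1)); first by ring.
  by rewrite hE oppr0.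
pose u : {unit 'Z_n} := FinRing.Unit Eu.
have valu i : FinRing.uval (u ^+ i)%g = E ^+ i by rewrite val_unitX.
have u6 : (u ^+ 6 = 1)%g by apply: val_inj; change (FinRing.uval (u ^+ 6)%g = 1); rewrite valu E6.
have memH h : h \in <[u]>%g -> exists2 i, (i < 6)%N & h = (u ^+ i)%g.
  case/cycleP => j ->; exists (j %% 6)%N; first by rewrite ltn_mod.
  by rewrite {1}(divn_eq j 6) expgD mulnC expgM u6 expg1n mul1g.
have unitH h : h \in <[u]>%g -> h != 1%g -> exists w, (FinRing.uval h - 1) * w = 1.
  move=> /memH [i i6 ->] hi; rewrite valu; apply: hpinv; rewrite i6 andbT lt0n.
  by apply: contraNneq hi => ->; rewrite expg0.
have E4 : E ^+ 4 = - E by rewrite exprS E3 mulrN1.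
have E5 : E ^+ 5 = - (E - 1) by rewrite exprS E4 mulrN -expr2 E2.
have tlE : tl_list n e (e - 1) 1 = map (fun i => E ^+ i) [:: 1; 4; 2; 5; 0; 3]%N.
  by rewrite /tl_list /= intrB -/E expr0 expr1 E2 E3 E4 E5 mulr1z.
have al : all (fun i => i < 6)%N [:: 1; 4; 2; 5; 0; 3]%N by [].
have n0 : (1 : 'Z_n) != 0 by rewrite oner_eq0.
have uval_neq0 (m : {unit 'Z_n}) (x : 'Z_n) : x * FinRing.uval m = 0 -> x = 0.
  move=> h; have uu : FinRing.uval m \is a GRing.unit by case: (m) {h}.
  by rewrite -[x](mulrK uu) h mul0r.
split => //.
  rewrite tlE map_inj_in_uniq // => i j hi hj; apply: hpinj.
    exact: (allP al i hi).
  exact: (allP al j hj).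
exists <[u]>%G; split.
  split.
  - move=> x z; exists (z - x); exists 1%g; first exact: group1.
    by rewrite /frob_act val_unit1 mulr1 addrC subrK.
  - exists 0, u; first exact: cycle_id.
    split; last by exists 0; rewrite /frob_act addr0 mul0r.
    move=> /(_ 1); rewrite /frob_act addr0 mul1r => hE1.
    have [w] := hpinv 1%N isT; rewrite expr1.
    change (FinRing.uval u) with E in hE1.
    by rewrite hE1 subrr mul0r => /eqP; rewrite eq_sym (negbTE n0).
  - move=> y m mH x1 x2 ne f1 f2.
    case: (eqVneq m 1%g) => [m1|m1].
      move: f1; rewrite /is_id_perm /frob_act m1 val_unit1 mulr1 => /eqP.
      rewrite -subr_eq0 addrC addKr => /eqP y0 x.
      by rewrite y0 addr0 mulr1.
    have [w hw] := unitH m mH m1.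
    have : (x1 - x2) * (FinRing.uval m - 1) = 0.
      transitivity ((x1 + y) * FinRing.uval m - (x2 + y) * FinRing.uval m - x1 + x2); first by ring.
      move: f1 f2; rewrite /frob_act => -> ->; ring.
    move/(congr1 (fun z => z * w)); rewrite -mulrA hw mulr1 mul0r => /eqP.
    by rewrite subr_eq0 (negbTE ne).
  - move=> y m mH; split.
      case: (eqVneq m 1%g) => // m1 [hid|hfp]; exfalso.
        have y0 : y = 0.
          by move: (hid 0); rewrite /frob_act add0r => /uval_neq0.
        move: (hid 1); rewrite /frob_act y0 addr0 mul1r => hm.
        by move/eqP: m1; apply; apply: val_inj; rewrite /= hm.
      have [w hw] := unitH m mH m1.
      move: (hfp (- (y * FinRing.uval m) * w)) => /eqP; apply.
      rewrite /frob_act.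
      transitivity ((- (y * FinRing.uval m) * w) + ((- (y * FinRing.uval m)) * ((FinRing.uval m - 1) * w) + y * FinRing.uval m)); first by ring.
      by rewrite hw; ring.
    move=> ->; case: (eqVneq y 0) => [->|y0].
      by left=> x; rewrite /frob_act addr0 val_unit1 mulr1.
    right=> x; rewrite /frob_act val_unit1 mulr1.
    by apply: contra y0 => /eqP h; apply/eqP; rewrite -(addKr x y) h addNr.
have hset : tl_set n e (e - 1) 1 = [set 1 * FinRing.uval h | h in <[u]>%G].
  apply/setP => z; rewrite /tl_set inE tlE; apply/mapP/imsetP.
    case=> i _ ->; exists (u ^+ i)%g; first exact: mem_cycle.
    by rewrite mul1r valu.
  case=> h /memH [i i6 ->] ->; exists i; last by rewrite mul1r valu.
  by move: i i6; do 6!case=> //.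
exists 1; split => //.
- apply/eqP; rewrite eqEsubset subsetT /=.
  rewrite Zp_cycle cycle_subG.
  have g2 : (((1 + 1)%R : 'Z_n) \in <<[set ((1%R : 'Z_n) * FinRing.uval h)%g | h in <[u]>%G]>>)%g.
    apply: mem_gen; apply/imsetP; exists 1%g; first exact: group1.
    by rewrite val_unit1 zmodMgE.
  have -> : Zp1 = (((1 + 1)%R : 'Z_n) ^+ ((n + 1) %/ 2))%g.
    rewrite zmodXgE -mulr_natr.
    transitivity (2 * (((n + 1) %/ 2)%N%:R : 'Z_n)); last by ring.
    by rewrite h2.
  exact: groupX.
- left.
  have c6 : #|tl_set n e (e - 1) 1| = 6%N.
    rewrite /tl_set cardsE; apply/card_uniqP.
    rewrite tlE map_inj_in_uniq // => i j hi hj; apply: hpinj.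
      exact: (allP al i hi).
    exact: (allP al j hj).
  rewrite -(card_in_imset (f := fun h => 1 * FinRing.uval h)).
    by rewrite -hset c6.
  by move=> h h' _ _; rewrite !mul1r => /val_inj.
Qed.


Lemma z3cases (C : 'Z_3) : [\/ C = 0, C = 1 | C = 2].
Proof.
case: C => [[|[|[|//]]]] h.
- by constructor 1; apply: val_inj.
- by constructor 2; apply: val_inj.
- by constructor 3; apply: val_inj.
Qed.

Lemma z2cases (C : 'Z_2) : C = 0 \/ C = 1.
Proof.
case: C => [[|[|//]]] h.
- by left; apply: val_inj.
- by right; apply: val_inj.
Qed.

Lemma norm_mod6 (c d : int) : gcdz c d = 1%N ->
  ~~ (3 %| c ^+ 2 + c * d + d ^+ 2)%Z -> (c ^+ 2 + c * d + d ^+ 2 = 1 %[mod 6])%Z.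
Proof.
move=> hg h3.
set N := c ^+ 2 + c * d + d ^+ 2.
have hN (m : nat) : ((N%:~R : 'Z_m) = (c%:~R) ^+ 2 + c%:~R * d%:~R + (d%:~R) ^+ 2).
  by rewrite /N !expr2 !intrD !intrM.
have d3 : (3 %| N - 1)%Z.
  rewrite -(Zn_inteq 3 N 1 isT) -/N mulr1z.
  have := hN 3%N.
  case: (z3cases (c%:~R)) => ->; case: (z3cases (d%:~R)) => -> hh;
  first [ by rewrite hh; apply/eqP
        | exfalso; move/negP: h3; apply; apply/(Zn_int0 3 N isT); by rewrite hh; apply/eqP ].
have d2 : (2 %| N - 1)%Z.
  rewrite -(Zn_inteq 2 N 1 isT) -/N mulr1z.
  have := hN 2%N.
  case: (z2cases (c%:~R)) => hc; case: (z2cases (d%:~R)) => hd; rewrite hc hd => hh;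
  first [ by rewrite hh; apply/eqP | idtac ].
  exfalso.
  have : (2 %| gcdz c d)%Z.
    rewrite dvdz_gcd; apply/andP; split; apply/(Zn_int0 2 _ isT); by [rewrite hc | rewrite hd].
  by rewrite hg.
apply/eqP; rewrite eqz_mod_dvd.
by rewrite (_ : 6 = 2 * 3) // Gauss_dvdz // d2 d3.
Qed.

Lemma exists_e (c d : int) : gcdz c d = 1%N ->
  exists e, (c ^+ 2 + c * d + d ^+ 2 %| c + d * e)%Z /\
            (c ^+ 2 + c * d + d ^+ 2 %| e ^+ 2 - e + 1)%Z.
Proof.
move=> hg.
set N := c ^+ 2 + c * d + d ^+ 2.
have [u [v hb]] := Bezoutz c d; rewrite hg in hb.
pose D' := u ^+ 2 * c + u ^+ 2 * d - 2 * u * v * c - v ^+ 2 * d.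
have hw : d * D' = u ^+ 2 * N - 1.
  transitivity (u ^+ 2 * N - (u * c + v * d) ^+ 2); first by rewrite /D' /N; ring.
  by rewrite hb expr1n.
exists (c * D'); split.
  apply/dvdzP; exists (c * u ^+ 2).
  transitivity (c + c * (d * D')); first by ring.
  by rewrite hw; ring.
set E := (c * D') ^+ 2 - c * D' + 1.
pose M := 1 - 2 * c ^+ 2 * u ^+ 2 + c ^+ 2 * u ^+ 4 * N - c * d * u ^+ 2.
have hdE : d ^+ 2 * E = N * M.
  transitivity (c ^+ 2 * (d * D') ^+ 2 - c * d * (d * D') + d ^+ 2); first by rewrite /E; ring.
  by rewrite hw /M /N; ring.
have h1 : u ^+ 2 * N - d * D' = 1 by rewrite hw; ring.
apply/dvdzP; exists (E * u ^+ 4 * N - 2 * E * u ^+ 2 * d * D' + D' ^+ 2 * M).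
transitivity (E * (u ^+ 2 * N - d * D') ^+ 2); first by rewrite h1 expr1n mulr1.
transitivity (E * u ^+ 4 * N ^+ 2 - 2 * E * u ^+ 2 * N * d * D' + D' ^+ 2 * (d ^+ 2 * E)); first by ring.
by rewrite hdE; ring.
Qed.

Lemma count (c d e : int) (n : nat) (a b e' : int) :
  (1 < n)%N -> (1 < `|(c ^+ 2 + c * d + d ^+ 2)%R|)%N ->
  (c ^+ 2 + c * d + d ^+ 2 %| c + d * e)%Z ->
  (c ^+ 2 + c * d + d ^+ 2 %| e ^+ 2 - e + 1)%Z ->
  ej_iso_tl (c, d) n a b e' -> n = `|(c ^+ 2 + c * d + d ^+ 2)%R|%N.
Proof.
set N := c ^+ 2 + c * d + d ^+ 2.
move=> n1 N1 hd he [f [hf1 hf2 _]].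
set m := `|N|%N.
have hm : m%:Z = N.
  rewrite /m gez0_abs // /N.
  have := sqr_ge0 (2 * c + d); have := sqr_ge0 d; lia.
rewrite -hm in hd he.
have hg := ejf_cong m c d e N1 (esym hm) hd he.
pose h (z : 'Z_m) : 'Z_n := f ((z : nat)%:Z, 0).
have gz (z : 'Z_m) : ejf m e ((z : nat)%:Z, 0) = z.
  by rewrite /ejf /= mul0r addr0 -pmulrn natr_Zp.
have hinj : injective h.
  move=> z z' /hf1 /hg; by rewrite !gz.
have le1 := leq_card h hinj.
have le2 : (#|'Z_n| <= #|'Z_m|)%N.
  have : [set: 'Z_n] \subset h @: [set: 'Z_m].
    apply/subsetP => x _; have [xi hxi] := hf2 x.
    apply/imsetP; exists (ejf m e xi) => //.
    rewrite /h -hxi; apply/hf1/hg; by rewrite gz.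
  move/subset_leq_card; rewrite cardsT => h1; apply: (leq_trans h1).
  by rewrite (leq_trans (leq_imset_card _ _)) // cardsT.
by apply/eqP; rewrite eqn_leq -(card_Zn _ n1) -(card_Zn m N1) le1 le2.
Qed.


Lemma part_b (c d : int) :
     7 <= ej_norm (c, d) ->
     gcdz c d = 1%N ->
     ((exists (n : nat) (a b e : int),
         (7 <= n)%N /\ frob_circ6 n a b e /\ ej_iso_tl (c, d) n a b e)
      <-> (ej_norm (c, d) = 1 %[mod 6])%Z).
Proof.
rewrite /ej_norm /=; set N := c ^+ 2 + c * d + d ^+ 2 => h7 hg.
have [e [he1 he2]] := exists_e c d hg; rewrite -/N in he1 he2.
set m := `|N|%N.
have hm : m%:Z = N by rewrite /m gez0_abs //; lia.
have m7 : (7 <= m)%N by lia.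
have m1 : (1 < m)%N by lia.
split.
  case=> n [a [b [e' [n7 [hf hiso]]]]].
  have := count c d e n a b e' (ltac:(lia)) m1 he1 he2 hiso; rewrite -/N -/m => hnm.
  have h3 := frob_not3 _ _ _ _ hf.
  apply: norm_mod6 => //.
  by rewrite -/N -hm dvdzE /= -hnm.
move=> h6.
rewrite -hm in he1 he2.
exists m, e, (e - 1), 1; split => //; split.
  apply: frob_construct => //.
  move: h6; rewrite -hm => /eqP; rewrite eqz_mod_dvd => /dvdzP [q hq].
  lia.
exact: iso_gen.
Qed.


Theorem theorem3p2 :
  (forall (n : nat) (a : int),
     (7 <= n)%N ->
     frob_circ6 n a (a - 1) 1 ->
     n = 1 %[mod 6] ->
     (a ^+ 2 - a + 1 = 0 %[mod n%:Z])%Z ->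
     forall k : int, a ^+ 2 - a + 1 = k * n%:Z ->
     exists c d : int,
       [/\ gcdz c d = 1%N,
           ej_iso_tl (c, d) n a (a - 1) 1 &
           exists m r s : int,
             [\/ (c = r * n%:Z + m /\ d = s * n%:Z - m * a /\
                  k * m ^+ 2 - ((a - 2) * r + (2 * a - 1) * s) * m
                  + (r ^+ 2 + r * s + s ^+ 2) * n%:Z = 1),
                 (c = r * n%:Z + m /\ d = s * n%:Z + m * (a - 1) /\
                  k * m ^+ 2 + ((a + 1) * r + (2 * a - 1) * s) * m
                  + (r ^+ 2 + r * s + s ^+ 2) * n%:Z = 1) |
                 (c = r * n%:Z + m * a /\ d = s * n%:Z - m * (a - 1) /\
                  k * m ^+ 2 + ((a + 1) * r - (a - 2) * s) * m
                  + (r ^+ 2 + r * s + s ^+ 2) * n%:Z = 1)]])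
  /\
  (forall c d : int,
     7 <= ej_norm (c, d) ->
     gcdz c d = 1%N ->
     ((exists (n : nat) (a b e : int),
         (7 <= n)%N /\ frob_circ6 n a b e /\ ej_iso_tl (c, d) n a b e)
      <-> (ej_norm (c, d) = 1 %[mod 6])%Z)).
Proof.
split.
  move=> n a n7 _ n6 _ k hk; exact: part_a.
move=> c d; exact: part_b.
Qed.
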